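(* Let $Y$ be a smooth irreducible quasi-projective variety, $\mathcal{A}$ a sheaf of commutative $\mathcal{O}_Y$-algebras that is locally free of rank $d\ge 2$, and $W$ a finite-dimensional $\mathbb{Z}/d\mathbb{Z}$-graded $\mathbf{k}$-vector space. Let $\psi:\mathcal{A}\oplus\mathcal{O}_Y\{T\}\to \operatorname{End}(W\otimes\mathcal{O}_Y)$ be a graded $\chi_{\mathcal{A}}$-Roby module. Then $\psi(T)$ is invertible, and the $\mathcal{O}_Y$-linear map $C_\psi:\mathcal{A}\to\operatorname{End}(W\otimes\mathcal{O}_Y)$, $C_\psi(a) = -\psi(a)\circ\psi(T)^{-1}$, is a characteristic morphism.
   Context: For a commutative ring $R$ and an $R$-algebra $A$ free of rank $d$ over $R$, with regular representation $\rho_A:A\to\operatorname{End}_R(A)$, the characteristic polynomial is $\chi_A(t,a)=\det(tI-\rho_A(a))=\sum_{j=0}^d(-1)^j\operatorname{tr}(\wedge^j\rho_A(a))t^{d-j}$; for an $R$-algebra $B$, $b\in B$, $a\in A$, $\chi_A(b,a)$ denotes $\sum_j(-1)^j\operatorname{tr}(\wedge^j\rho_A(a))b^{d-j}\in B$. An $R$-linear map $\phi:A\to B$ is a characteristic morphism if $\chi_A(\phi(a),a)=0$ for all $a\in A$. For sheaves, $\chi_{\mathcal{A}}$ is defined globally from the regular representation of $\mathcal{A}$, and an $\mathcal{O}_Y$-linear map $\phi:\mathcal{A}\to\mathcal{B}$ to a coherent sheaf of $\mathcal{O}_Y$-algebras is a characteristic morphism if each stalk map $\phi_y$ is one. An $\mathcal{O}_Y$-linear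 map $\psi:\mathcal{A}\oplus\mathcal{O}_Y\{T\}\to\operatorname{End}(W\otimes\mathcal{O}_Y)$ (where $\mathcal{O}_Y\{T\}$ is the free rank-one module on $T$) is a $\chi_{\mathcal{A}}$-Roby module if for every $y\in Y$ and all local sections $a\in\mathcal{A}_y$, $r\in\mathcal{O}_{Y,y}$ one has $\psi(a+rT)^d=\chi_{\mathcal{A}}(r,a)\cdot\mathrm{Id}$, where $\chi_{\mathcal{A}}(r,a)=\det(r\cdot I-\rho_{\mathcal{A}}(a))$; it is graded if $W$ is $\mathbb{Z}/d\mathbb{Z}$-graded and each $\psi(a+rT)$ is homogeneous of degree $1$. The base field $\mathbf{k}$ is algebraically closed of characteristic zero. *)

(* Defs.v *)
From HB Require Import structures.
From mathcomp Require Import all_boot all_order all_algebra.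
Set Implicit Arguments. Unset Strict Implicit. Unset Printing Implicit Defensive.
Import Order.TTheory GRing.Theory Num.Theory.
Local Open Scope ring_scope.

Definition is_basis (R : comNzRingType) (A : lmodType R) (d : nat)
  (bA : 'I_d -> A) (cA : A -> 'rV[R]_d) : Prop :=
  (forall x : A, x = \sum_(i < d) cA x 0 i *: bA i) /\
  (forall i : 'I_d, cA (bA i) = delta_mx 0 i).

(* Matrix of the regular representation rho_A(a) in the basis bA
   (row i = coordinates of a * bA i; char. poly is transpose-invariant). *)
Definition regmx (R : comNzRingType) (A : comAlgType R) (d : nat)
  (bA : 'I_d -> A) (cA : A -> 'rV[R]_d) (a : A) : 'M[R]_d :=
  \matrix_(i < d, j < d) cA (a * bA i) 0 j.

Definition chiA (R : comNzRingType) (A : comAlgType R) (d : nat)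
  (bA : 'I_d -> A) (cA : A -> 'rV[R]_d) (a : A) : {poly R} :=
  char_poly (regmx bA cA a).

Definition mxeval (R : comNzRingType) (n : nat) (p : {poly R}) (M : 'M[R]_n)
  : 'M[R]_n := \sum_(j < size p) p`_j *: M ^+ j.

(* Homogeneous of degree 1 w.r.t. the Z/dZ-grading deg of the basis of W:
   sends W_j to W_{j+1}. *)
Definition homog1 (R : comNzRingType) (n d : nat) (deg : 'I_n -> 'Z_d)
  (M : 'M[R]_n) : Prop :=
  forall i j : 'I_n, deg i != deg j + 1 -> M i j = 0.

Definition local_ring (R : comUnitRingType) : Prop :=
  forall x y : R, x \notin GRing.unit -> y \notin GRing.unit ->
    (x + y) \notin GRing.unit.

(* Main.v *)
Require Import Defs.
From HB Require Import structures.
From mathcomp Require Import all_boot all_order all_algebra.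
Import GRing.Theory.
Local Open Scope ring_scope.

Lemma natk_inj (k : fieldType) (k_char0 : [pchar k] =i pred0) :
  injective (fun i : nat => (i%:R : k)).
Proof.
have H := (pcharf0P k).1 k_char0.
suff W : forall i j : nat, (i <= j)%N -> (i%:R : k) = j%:R -> i = j.
  move=> i j /= E; case: (leqP i j) => [le|/ltnW le]; first exact: W.
  by apply/esym/W.
move=> i j le E; apply/eqP; rewrite eqn_leq le /=.
have : ((j - i)%N%:R : k) == 0 by rewrite natrB // E subrr.
by rewrite H subn_eq0.
Qed.

Theorem mainTheorem3
  (k : closedFieldType) (k_char0 : [pchar k] =i pred0)
  (R : comUnitAlgType k)
  (R_domain : GRing.integral_domain_axiom R)
  (R_local : local_ring R)
  (d : nat) (d_ge2 : (2 <= d)%N)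
  (A : comAlgType R) (bA : 'I_d -> A) (cA : {linear A -> 'rV[R]_d})
  (A_free : is_basis bA cA)
  (n : nat) (deg : 'I_n -> 'Z_d)
  (psiA : {linear A -> 'M[R]_n}) (psiT : 'M[R]_n)
  (roby : forall (a : A) (r : R),
            (psiA a + r *: psiT) ^+ d = ((chiA bA cA a).[r])%:M)
  (graded : forall (a : A) (r : R), homog1 deg (psiA a + r *: psiT)) :
  psiT \in unitmx /\
  (forall a : A, mxeval (chiA bA cA a) (- (psiA a *m invmx psiT)) = 0).
Proof.
have hT1 : psiT ^+ d = 1.
  have := roby 0 1; rewrite linear0 scale1r add0r => ->.
  rewrite /chiA; have -> : regmx bA cA 0 = 0.
    by apply/matrixP => i j; rewrite !mxE mul0r linear0 mxE.
  rewrite /char_poly /char_poly_mx map_mx0 subr0 det_scalar hornerXn.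
  by rewrite expr1n.
case: d d_ge2 bA cA A_free deg roby graded hT1 => [//|d'] _ bA cA _ _ roby _ hT1.
have Tu : psiT \in unitmx.
  have H : psiT *m psiT ^+ d' = 1%:M by rewrite mulmxE -exprS hT1.
  by have [] := mulmx1_unit H.
split => // a.
case: n psiA psiT roby hT1 Tu a => [|n'] psiA psiT roby hT1 Tu a.
  by apply/matrixP => [[]].
set T := psiT; set X := psiA a; set chi := chiA bA cA a.
pose V := - (invmx T *m X).
have TV : T * V = - X by rewrite mulrN -mulmxE mulmxA mulmxV // mul1mx.
pose F : {poly 'M[R]_n'.+1} := (T%:P * ('X - V%:P)) ^+ d'.+1.
pose Cp : {poly 'M[R]_n'.+1} := map_poly (@scalar_mx R n'.+1) chi.
have FrE : forall r : R, (F - Cp).[r%:M] = 0.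
  move=> r.
  have cr : forall p : {poly 'M[R]_n'.+1}, comm_poly p r%:M.
    by move=> p; rewrite /comm_poly -!mulmxE scalar_mxC.
  rewrite hornerD hornerN horner_exp_comm // hornerM_comm // hornerC hornerXsubC.
  rewrite horner_map /= mulrBr TV opprK -mulmxE scalar_mxC mul_scalar_mx.
  rewrite [r *: T + X]addrC (roby a r); exact: subrr.
have FC : F = Cp.
  apply/eqP; rewrite -subr_eq0; apply/negPn/negP => nz.
  pose f := (@scalar_mx R n'.+1) \o (in_alg R).
  pose N := size (F - Cp).
  pose s := [seq (i%:R : k) | i <- iota 0 N].
  have r1 : all (root (F - Cp)) (map f s).
    by apply/allP => x /mapP[c _ ->]; rewrite /root /f /= FrE.
  have r2 : uniq_roots (map f s).
    rewrite map_uniq_roots map_inj_uniq ?iota_uniq //.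
    exact: natk_inj.
  have := max_ring_poly_roots nz r1 r2.
  by rewrite size_map size_map size_iota ltnn.
have FV : F.[V] = 0.
  rewrite /F exprSr mulrA hornerM_comm.
    by rewrite hornerXsubC subrr mulr0.
  by rewrite /comm_poly hornerXsubC subrr mulr0 mul0r.
have chiV : mxeval chi V = 0.
  have scinj : injective (@scalar_mx R n'.+1).
    by move=> x y /(congr1 (fun M : 'M[R]_n'.+1 => M 0 0)); rewrite !mxE eqxx !mulr1n.
  rewrite -FV FC horner_coef size_map_inj_poly //; last exact: raddf0.
  by apply: eq_bigr => i _; rewrite coef_map /= -mulmxE mul_scalar_mx.
have UE : - (X *m invmx T) = T * V * invmx T.
  by rewrite TV -mulmxE mulNmx.
have powE : forall j, (T * V * invmx T) ^+ j = T * V ^+ j * invmx T.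
  elim=> [|j IH]; first by rewrite !expr0 mulr1 -mulmxE mulmxV.
  rewrite exprS IH -!mulmxE !mulmxA -[_ *m invmx T *m T]mulmxA mulVmx //.
  by rewrite mulmx1 !mulmxE exprS !mulrA.
suff E : mxeval chi (T * V * invmx T) = 0 by rewrite -UE in E.
rewrite /mxeval.
under eq_bigr => j _ do rewrite powE scalerAl scalerAr.
by rewrite -mulr_suml -mulr_sumr -/(mxeval chi V) chiV mulr0 mul0r.
Qed.
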